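(* On the class of reflexive bimodal models, $\mathcal{L}(\boxdot)$ is less expressive than $\mathcal{L}(\boxplus)$: every $\mathcal{L}(\boxdot)$-formula is equivalent on this class to some $\mathcal{L}(\boxplus)$-formula, but some $\mathcal{L}(\boxplus)$-formula is not equivalent on this class to any $\mathcal{L}(\boxdot)$-formula.
   Context: Fix a nonempty set $\mathbf{P}$ of propositional variables. A bimodal model is $\mathcal{M}=\langle S,R_1,R_2,V\rangle$ with $S$ a nonempty set, $R_1,R_2\subseteq S\times S$, and $V:\mathbf{P}\to\mathcal{P}(S)$. A bimodal model is reflexive if both $R_1$ and $R_2$ are reflexive. Write $R_i(s)=\{t\mid sR_it\}$. The languages are $\mathcal{L}(\boxdot):\ \phi::=p\mid\neg\phi\mid(\phi\wedge\phi)\mid\boxdot\phi$ and $\mathcal{L}(\boxplus):\ \phi::=p\mid\neg\phi\mid(\phi\wedge\phi)\mid\boxplus\phi$. Truth: $\mathcal{M},s\vDash p$ iff $s\in V(p)$; Booleans as usual; $\mathcal{M},s\vDash\boxdot\phi$ iff for all $t,u$ with $sR_1t$ and $sR_2u$, ($\mathcal{M},t\vDash\phi\iff\mathcal{M},u\vDash\phi$); $\mathcal{M},s\vDash\boxplus\phi$ iff ($\mathcal{M},t\vDash\phi$ for all $t\in R_1(s)$) or ($\mathcal{M},u\vDash\neg\phi$ for all $u\in R_2(s)$). Two formulas are equivalent on a class of models if they are true at exactly the same pointed models of that class. *)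

(* Defs.v *)
From Stdlib Require Import Classical.

Set Implicit Arguments.

Inductive fdot (P : Type) : Type :=
| DVar : P -> fdot P
| DNeg : fdot P -> fdot P
| DAnd : fdot P -> fdot P -> fdot P
| DBox : fdot P -> fdot P.

Inductive fplus (P : Type) : Type :=
| PVar : P -> fplus P
| PNeg : fplus P -> fplus P
| PAnd : fplus P -> fplus P -> fplus P
| PBox : fplus P -> fplus P.

Arguments DVar {P} _.  Arguments DNeg {P} _.  Arguments DAnd {P} _ _.  Arguments DBox {P} _.
Arguments PVar {P} _.  Arguments PNeg {P} _.  Arguments PAnd {P} _ _.  Arguments PBox {P} _.

Record model (P : Type) : Type := Model {
  St : Type;
  st_inh : inhabited St;
  R1 : St -> St -> Prop;
  R2 : St -> St -> Prop;
  Val : P -> St -> Prop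
}.

Definition reflexive_model (P : Type) (M : model P) : Prop :=
  (forall s, R1 M s s) /\ (forall s, R2 M s s).

Fixpoint sat_dot (P : Type) (M : model P) (s : St M) (f : fdot P) : Prop :=
  match f with
  | DVar p => Val M p s
  | DNeg g => ~ sat_dot M s g
  | DAnd g h => sat_dot M s g /\ sat_dot M s h
  | DBox g => forall t u, R1 M s t -> R2 M s u -> (sat_dot M t g <-> sat_dot M u g)
  end.

Fixpoint sat_plus (P : Type) (M : model P) (s : St M) (f : fplus P) : Prop :=
  match f with
  | PVar p => Val M p s
  | PNeg g => ~ sat_plus M s g
  | PAnd g h => sat_plus M s g /\ sat_plus M s h
  | PBox g => (forall t, R1 M s t -> sat_plus M t g)
              \/ (forall u, R2 M s u -> ~ sat_plus M u g)
  end.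

Definition equiv_refl (P : Type) (f : fdot P) (g : fplus P) : Prop :=
  forall (M : model P) (s : St M), reflexive_model M ->
    (sat_dot M s f <-> sat_plus M s g).

(* Main.v *)
Require Import Defs.
From Stdlib Require Import Classical.

Fixpoint tr {P : Type} (f : fdot P) : fplus P :=
  match f with
  | DVar p => PVar p
  | DNeg g => PNeg (tr g)
  | DAnd g h => PAnd (tr g) (tr h)
  | DBox g => PAnd (PBox (tr g)) (PBox (PNeg (tr g)))
  end.

Lemma tr_ok (P : Type) (f : fdot P) : equiv_refl f (tr f).
Proof.
  induction f; intros M s [H1 H2]; simpl.
  - tauto.
  - specialize (IHf M s (conj H1 H2)); tauto.
  - specialize (IHf1 M s (conj H1 H2)); specialize (IHf2 M s (conj H1 H2)); tauto.
  - assert (E : forall x, sat_dot M x f <-> sat_plus M x (tr f))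
      by (intro x; apply IHf; split; assumption).
    split.
    + intro H.
      destruct (classic (sat_dot M s f)) as [Hs|Hs].
      * split.
        -- left; intros t Ht. apply E. apply (proj2 (H t s Ht (H2 s))); exact Hs.
        -- right; intros u Hu Hn. apply Hn. apply E. apply (proj1 (H s u (H1 s) Hu)); exact Hs.
      * split.
        -- right; intros u Hu Hn. apply Hs. apply (proj2 (H s u (H1 s) Hu)). apply E; exact Hn.
        -- left; intros t Ht Hn. apply Hs. apply (proj1 (H t s Ht (H2 s))). apply E; exact Hn.
    + intros [[A|A] [B|B]] t u Ht Hu.
      * exfalso. apply (B s (H1 s)). apply A, H1.
      * rewrite !E. split; intros _; [apply NNPP; apply B; exact Hu | apply A; exact Ht].
      * rewrite !E. split; intro X; exfalso; [apply (B t Ht X) | apply (A u Hu X)].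
      * exfalso. apply (A s (H2 s)). apply NNPP, B, H2.
Qed.

Definition swap {P : Type} (M : model P) : model P :=
  Model (st_inh M) (R2 M) (R1 M) (Val M).

Lemma swap_ok (P : Type) (M : model P) (f : fdot P) :
  forall s : St M, sat_dot (swap M) s f <-> sat_dot M s f.
Proof.
  induction f; intro s; simpl.
  - tauto.
  - rewrite IHf; tauto.
  - rewrite IHf1, IHf2; tauto.
  - split; intros H t u Ht Hu.
    + rewrite <- !IHf. symmetry. apply H; assumption.
    + rewrite !IHf. symmetry. apply H; assumption.
Qed.

Definition Mex {P : Type} : model P :=
  @Model P bool (inhabits true) (fun x y => x = y)
    (fun x y => x = y \/ (x = true /\ y = false)) (fun _ s => s = true).

Theorem proposition3p4 (P : Type) (HP : inhabited P) :
  (forall f : fdot P, exists g : fplus P, equiv_refl f g) /\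
  (exists g : fplus P, forall f : fdot P, ~ equiv_refl f g).
Proof.
  split.
  - intro f; exists (tr f); apply tr_ok.
  - destruct HP as [p]. exists (PBox (PVar p)). intros f Hf.
    assert (R : reflexive_model (@Mex P)) by (split; simpl; auto).
    assert (R' : reflexive_model (swap (@Mex P))) by (split; simpl; auto).
    assert (A : sat_plus (@Mex P) true (PBox (PVar p))).
    { left. simpl. intros t Ht; subst; reflexivity. }
    assert (B : ~ sat_plus (swap (@Mex P)) true (PBox (PVar p))).
    { simpl. intros [C|C].
      - specialize (C false (or_intror (conj eq_refl eq_refl))). discriminate.
      - apply (C true eq_refl). reflexivity. }
    apply B. apply (Hf (swap (@Mex P)) true R'). apply swap_ok.
    apply (Hf (@Mex P) true R). exact A.
Qed.
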